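(* Let $V$ be a real vector space of dimension $n$, $1\le k\le n-1$, and let $L\subseteq V\oplus\wedge^kV^*$ be a weakly lagrangian subspace with $L\cap\wedge^kV^*=\{0\}$. Then $L=\{X+\varepsilon(X)\mid X\in E\}$ where $E=\mathrm{pr}_1(L)$ and $\varepsilon:E\to\wedge^kV^*$ is a linear $E$-skew map satisfying $\mathrm{Im}(\varepsilon)^\circ=\ker(\varepsilon)$. Moreover, $L$ is lagrangian if and only if $E=V$.
   Context: On $V\oplus\wedge^kV^*$ consider the $\wedge^{k-1}V^*$-valued pairing $\langle X+\alpha,Y+\beta\rangle=i_X\beta+i_Y\alpha$; $L^\perp$ denotes the orthogonal of $L$. $L$ is isotropic if $L\subseteq L^\perp$ and lagrangian if $L=L^\perp$. $\mathrm{pr}_1,\mathrm{pr}_2$ are the projections onto $V$ and $\wedge^kV^*$. For a subspace $S\subseteq\wedge^kV^*$, $S^\circ=\{X\in V\mid i_X\eta=0\ \forall \eta\in S\}$. A subspace $L$ is weakly lagrangian if it is isotropic and $L\cap V=\mathrm{pr}_2(L)^\circ$. A linear map $\varepsilon:E\to\wedge^kV^*$ is $E$-skew if $i_Y\varepsilon(X)=-i_X\varepsilon(Y)$ for all $X,Y\in E$. *)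

(* Defs.v *)
(* Forms are encoded as functions seq V -> R; a k-kForm (element of /\^k V^* )
   is such a function that vanishes on sequences of length <> k, and is
   multilinear and alternating in its arguments. *)
From HB Require Import structures.
From mathcomp Require Import all_boot all_order all_algebra.
From mathcomp Require Import reals.
Set Implicit Arguments. Unset Strict Implicit. Unset Printing Implicit Defensive.
Import GRing.Theory Num.Theory.
Local Open Scope ring_scope.

Section Defs.
Variables (R : realType) (n : nat).

Definition Vsp := 'rV[R]_n.
Definition kForm := seq Vsp -> R.

Definition form0 : kForm := fun _ => 0.
Definition formD (a b : kForm) : kForm := fun s => a s + b s.
Definition formZ (c : R) (a : kForm) : kForm := fun s => c * a s.

Definition multilinear (f : kForm) : Prop :=
  forall (s1 s2 : seq Vsp) (c : R) (x y : Vsp),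
    f (s1 ++ (c *: x + y) :: s2) = c * f (s1 ++ x :: s2) + f (s1 ++ y :: s2).

Definition alternating (f : kForm) : Prop :=
  forall (s1 s2 s3 : seq Vsp) (x : Vsp), f (s1 ++ x :: s2 ++ x :: s3) = 0.

Definition is_kform (k : nat) (f : kForm) : Prop :=
  [/\ forall s, size s <> k -> f s = 0, multilinear f & alternating f].

Definition contract (X : Vsp) (f : kForm) : kForm := fun s => f (X :: s).

Definition pairing (p q : Vsp * kForm) : kForm :=
  formD (contract p.1 q.2) (contract q.1 p.2).

Definition subspace (k : nat) (L : Vsp * kForm -> Prop) : Prop :=
  [/\ L (0, form0),
      forall p q, L p -> L q -> L (p.1 + q.1, formD p.2 q.2),
      forall c p, L p -> L (c *: p.1, formZ c p.2)
    & forall p, L p -> is_kform k p.2].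

Definition orth (k : nat) (L : Vsp * kForm -> Prop) : Vsp * kForm -> Prop :=
  fun p => is_kform k p.2 /\ forall q, L q -> pairing p q = form0.

Definition isotropic k L := forall p, L p -> orth k L p.
Definition lagrangian k L := forall p, L p <-> orth k L p.

Definition pr1 (L : Vsp * kForm -> Prop) : Vsp -> Prop := fun X => exists a, L (X, a).
Definition pr2 (L : Vsp * kForm -> Prop) : kForm -> Prop := fun a => exists X, L (X, a).

Definition ann (S : kForm -> Prop) : Vsp -> Prop :=
  fun X => forall eta, S eta -> contract X eta = form0.

Definition weakly_lagrangian k L :=
  isotropic k L /\ (forall X, L (X, form0) <-> ann (pr2 L) X).

Definition linear_on (E : Vsp -> Prop) (eps : Vsp -> kForm) : Prop :=
  forall c X Y, E X -> E Y -> eps (c *: X + Y) = formD (formZ c (eps X)) (eps Y).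

Definition E_skew (E : Vsp -> Prop) (eps : Vsp -> kForm) : Prop :=
  forall X Y, E X -> E Y -> contract Y (eps X) = formZ (-1) (contract X (eps Y)).

End Defs.

(* Main.v *)
Require Import Defs.
From HB Require Import structures.
From mathcomp Require Import all_boot all_order all_algebra.
From mathcomp Require Import reals.
From mathcomp Require Import ring lra zify.
From Stdlib Require Import Classical FunctionalExtensionality ClassicalEpsilon.
Set Implicit Arguments. Unset Strict Implicit.
Import GRing.Theory Num.Theory.
Local Open Scope ring_scope.


Lemma rows_closed (R : realType) (n : nat) (E : 'rV[R]_n -> Prop) :
  E 0 -> (forall c x y, E x -> E y -> E (c *: x + y)) ->
  forall m (B : 'M_(m,n)), (forall i, E (row i B)) -> forall v, (v <= B)%MS -> E v.
Proof.
move=> E0 Ecl m B HB v /submxP [u ->]; rewrite mulmx_sum_row.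
apply: (big_ind E) => //.
  by move=> x y Ex Ey; have := Ecl 1 x y Ex Ey; rewrite scale1r.
by move=> i _; have := Ecl (u 0 i) _ 0 (HB i) E0; rewrite addr0.
Qed.

Lemma exists_basis (R : realType) (n : nat) (E : 'rV[R]_n -> Prop) :
  E 0 -> (forall c x y, E x -> E y -> E (c *: x + y)) ->
  forall d (A : 'M[R]_n), (forall i, E (row i A)) -> (n - \rank A <= d)%N ->
  exists A' : 'M[R]_n, (forall i, E (row i A')) /\ forall Y, E Y -> (Y <= A')%MS.
Proof.
move=> E0 Ecl d; elim: d => [|d IH] A HA hd.
  exists A; split=> // Y _; apply: submx_full; rewrite /row_full eqn_leq rank_leq_col /=.
  lia.
case: (classic (forall Y, E Y -> (Y <= A)%MS)) => [H|]; first by exists A.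
move=> /not_all_ex_not [Y HY]; have [EY nY] := imply_to_and _ _ HY.
have nY' : ~~ (Y <= A)%MS by apply/negP.
have lt : (A < A + Y)%MS by rewrite ltmxE addsmxSl /= addsmx_sub submx_refl /=.
have := rank_ltmx lt => hr.
apply: (IH (A + Y)%MS).
  move=> i; apply: (@rows_closed _ _ _ E0 Ecl _ (A + Y)%MS).
  - move=> j; have := row_sub j (A + Y)%MS => /sub_addsmxP [u ->].
    have := Ecl 1 _ _ (rows_closed E0 Ecl HA (submxMl u.1 A))
      (@rows_closed _ _ _ E0 Ecl _ Y (fun i => eq_ind_r E (EY) (row_id i Y)) _ (submxMl u.2 Y)).
    by rewrite scale1r.
  - exact: row_sub.
have := rank_leq_col (A + Y)%MS; lia.
Qed.

Lemma exists_proj (R : realType) (n : nat) (E : 'rV[R]_n -> Prop) :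
  E 0 -> (forall c x y, E x -> E y -> E (c *: x + y)) ->
  exists Q : 'rV[R]_n -> 'rV[R]_n, [/\ forall v, E (Q v), forall Y, E Y -> Q Y = Y &
     forall c x y, Q (c *: x + y) = c *: Q x + Q y].
Proof.
move=> E0 Ecl.
have [A [HA HE]] := exists_basis E0 Ecl (d := n) (A := 0) (fun i => eq_ind_r E E0 (@row0 _ _ _ i)) (leq_subr _ _).
exists (fun v => v *m (pinvmx A *m A)); split.
- move=> v; apply: (rows_closed E0 Ecl HA); by rewrite mulmxA submxMl.
- by move=> Y EY; rewrite mulmxA mulmxKpV //; apply: HE.
- by move=> c x y; rewrite mulmxDl scalemxAl.
Qed.



Section T.
Variables (R : realType) (n : nat).
Notation V := (Vsp R n).
Notation F := (kForm R n).

Fixpoint T (Q : V -> V) (s : seq V) (phi : V -> F) : R :=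
  match s with
  | [::] => 0
  | v :: s' => phi (Q v) s' - T Q s' (fun Y t => phi Y ((v - Q v) :: t))
  end.

Lemma T_ext Q s phi psi : (forall Y t, phi Y t = psi Y t) -> T Q s phi = T Q s psi.
Proof.
elim: s phi psi => [|v s IH] phi psi H //=.
by rewrite H (IH _ (fun Y t => psi Y ((v - Q v) :: t))).
Qed.

Lemma T_zero Q s phi : (forall Y t, phi Y t = 0) -> T Q s phi = 0.
Proof.
elim: s phi => [|v s IH] phi H //=.
by rewrite H IH ?subr0.
Qed.

Lemma T_lin Q s (c : R) phi psi :
  T Q s (fun Y t => c * phi Y t + psi Y t) = c * T Q s phi + T Q s psi.
Proof.
elim: s phi psi => [|v s IH] phi psi /=; first by ring.
rewrite (IH (fun Y t => phi Y ((v - Q v) :: t)) (fun Y t => psi Y ((v - Q v) :: t))).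
ring.
Qed.

Lemma ml2 (f : F) : multilinear f -> forall s1 s2 x y,
  f (s1 ++ (x + y) :: s2) = f (s1 ++ x :: s2) + f (s1 ++ y :: s2).
Proof. by move=> H s1 s2 x y; have := H s1 s2 1 x y; rewrite scale1r mul1r. Qed.

Lemma ml0 (f : F) : multilinear f -> forall s1 s2, f (s1 ++ 0 :: s2) = 0.
Proof.
move=> H s1 s2; have := ml2 H s1 s2 0 0; rewrite addr0 => e.
have : f (s1 ++ 0 :: s2) + 0 = f (s1 ++ 0 :: s2) + f (s1 ++ 0 :: s2) by rewrite addr0.
by move/addrI.
Qed.

Lemma swap (f : F) : multilinear f -> forall s1 s2 s3 a b,
  (forall x, f (s1 ++ x :: s2 ++ x :: s3) = 0) ->
  f (s1 ++ a :: s2 ++ b :: s3) = - f (s1 ++ b :: s2 ++ a :: s3).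
Proof.
move=> H s1 s2 s3 a b A.
have := A (a + b); rewrite ml2 //.
have e : forall y z, f (s1 ++ y :: s2 ++ z :: s3) = f ((s1 ++ y :: s2) ++ z :: s3).
  by move=> y z; rewrite -catA.
rewrite !e !ml2 // -!e !A.
move=> h; apply/eqP; rewrite -addr_eq0; apply/eqP; rewrite -h; ring.
Qed.

Definition valid (E : V -> Prop) (phi : V -> F) :=
  [/\ forall Y, multilinear (phi Y), forall Y, alternating (phi Y),
      forall (c : R) (Y Z : V), E Y -> E Z -> phi (c *: Y + Z) = Defs.formD (Defs.formZ c (phi Y)) (phi Z)
    & forall (Y Z : V) s, E Y -> E Z -> phi Y (Z :: s) = - phi Z (Y :: s)].

Definition Qok (E : V -> Prop) (Q : V -> V) :=
  [/\ forall v, E (Q v), forall Y, E Y -> Q Y = Y &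
     forall (c : R) (x y : V), Q (c *: x + y) = c *: Q x + Q y].

Lemma valid_contract E phi u : valid E phi -> valid E (fun Y t => phi Y (u :: t)).
Proof.
case=> Hm Ha Hl Hs; split.
- by move=> Y s1 s2 c x y; apply: (Hm Y (u :: s1)).
- by move=> Y s1 s2 s3 x; apply: (Ha Y (u :: s1)).
- move=> c Y Z EY EZ; apply: functional_extensionality => t.
  by rewrite Hl.
- move=> Y Z s EY EZ.
  have sw : forall W a b, phi W (a :: b :: s) = - phi W (b :: a :: s).
    by move=> W a b; apply: (@swap _ (Hm W) [::] [::] s) => x; apply: (Ha _ [::] [::]).
  by rewrite sw (Hs Y Z) // sw opprK.
Qed.

Lemma T_head E Q phi Y t : Qok E Q -> valid E phi -> E Y -> T Q (Y :: t) phi = phi Y t.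
Proof.
case=> _ QE _ [Hm _ _ _] EY /=.
rewrite QE // T_zero ?subr0 // => Z u.
by rewrite subrr; apply: (ml0 (Hm Z) [::]).
Qed.

Lemma T_size Q : forall s m phi, (forall Y t, size t <> m -> phi Y t = 0) ->
  size s <> m.+1 -> T Q s phi = 0.
Proof.
elim=> [|v s IH] m phi H hs //=.
rewrite H; last by move=> e; apply: hs; rewrite /= e.
case: m H hs => [|m] H hs.
  by rewrite T_zero ?subr0 // => Y t; rewrite H.
rewrite (IH m) ?subr0 //.
  by move=> Y t ht; rewrite H //= => -[].
by move=> e; apply: hs; rewrite /= e.
Qed.

Lemma T_multilinear E Q phi : Qok E Q -> valid E phi -> multilinear (fun s => T Q s phi).
Proof.
move=> hQ; case: (hQ) => QinE QE Qlin.
move=> hv s1; elim: s1 phi hv => [|v s1 IH] phi hv s2 c x y /=.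
  case: (hv) => Hm Ha Hl Hs.
  rewrite Qlin Hl // /Defs.formD /Defs.formZ.
  rewrite (@T_ext _ _ _ (fun Y t => c * phi Y ((x - Q x) :: t) + phi Y ((y - Q y) :: t))).
    rewrite T_lin; ring.
  move=> Y t.
  have -> : c *: x + y - (c *: Q x + Q y) = c *: (x - Q x) + (y - Q y).
    by rewrite scalerBr; rewrite addrACA opprD.
  by rewrite (Hm Y [::]).
case: (hv) => Hm Ha Hl Hs.
rewrite (Hm (Q v)) IH; last exact: valid_contract.
ring.
Qed.

Lemma T_front E Q phi x r : Qok E Q -> valid E phi ->
  phi (Q x) (x :: r) = T Q (x :: r) (fun Y t => phi Y ((x - Q x) :: t)).
Proof.
move=> [QinE QE Qlin] [Hm Ha Hl Hs] /=.
rewrite (@T_zero _ _ (fun Y t => phi Y ((x - Q x) :: (x - Q x) :: t))); last first.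
  by move=> Y t; apply: (Ha Y [::] [::]).
rewrite subr0.
have -> : phi (Q x) (x :: r) = phi (Q x) (Q x :: r) + phi (Q x) ((x - Q x) :: r).
  by rewrite -(ml2 (Hm (Q x)) [::]) /= addrC subrK.
have h := Hs (Q x) (Q x) r (QinE x) (QinE x).
have -> : phi (Q x) (Q x :: r) = 0 by lra.
by rewrite add0r.
Qed.

Lemma T_cons Q v s phi :
  T Q (v :: s) phi = phi (Q v) s - T Q s (fun Y t => phi Y ((v - Q v) :: t)).
Proof. by []. Qed.

Lemma T_alt E Q phi : Qok E Q -> valid E phi -> alternating (fun s => T Q s phi).
Proof.
move=> hQ hv s1 s2 s3 x.
move: {2}(size _) (leqnn (size (s1 ++ x :: s2 ++ x :: s3))) => m.
elim: m phi hv s1 s2 s3 x => [|m IH] phi hv s1 s2 s3 x.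
  by rewrite size_cat /= addnS.
case: s1 => [|v s1] hs; last first.
  case: (hv) => Hm Ha Hl Hs.
  rewrite cat_cons T_cons Ha (IH _ (valid_contract _ hv)) ?subr0 //.
rewrite cat0s T_cons.
case: s2 hs => [|y s2] hs.
  by rewrite cat0s -(T_front _ _ hQ hv) subrr.
have hv' := valid_contract (x - Q x) hv.
case: (hv) => Hm Ha Hl Hs.
rewrite (@swap _ (Hm (Q x)) [::] s2 s3 y x); last by move=> z; apply: (Ha _ [::]).
rewrite (@swap _ (T_multilinear hQ hv') [::] s2 s3 y x); last first.
  move=> z; apply: IH => //; move: hs; rewrite /= !size_cat /=; lia.
by rewrite -(T_front _ _ hQ hv) subrr.
Qed.
End T.

Unset Implicit Arguments. Set Strict Implicit.


Theorem proposition3p12 (R : realType) (n k : nat)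
    (L : Vsp R n * kForm R n -> Prop) :
  (0 < k)%N -> (k <= n.-1)%N ->
  subspace k L -> weakly_lagrangian k L ->
  (forall a, L (0, a) -> a = @form0 R n) ->
  (exists eps : Vsp R n -> kForm R n,
     [/\ forall X, pr1 L X -> is_kform k (eps X),
         linear_on (pr1 L) eps,
         forall p, L p <-> (pr1 L p.1 /\ p.2 = eps p.1),
         E_skew (pr1 L) eps
       & forall X, ann (fun eta => exists2 Y, pr1 L Y & eta = eps Y) X
                   <-> (pr1 L X /\ eps X = @form0 R n)]) /\
  (lagrangian k L <-> forall X, pr1 L X).
Proof.
move=> k0 _ [L0 Ladd Lscale Lk] [iso wl] Lv.
have uniq : forall X a b, L (X, a) -> L (X, b) -> a = b.
  move=> X a b ha hb.
  have := Ladd _ _ ha (Lscale (-1) _ hb); rewrite /= scaleN1r subrr => /Lv h.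
  apply: functional_extensionality => s.
  have := congr1 (fun f => f s) h; rewrite /Defs.formD /Defs.formZ /Defs.form0 /=.
  move=> e; lra.
have hex : forall X, exists a, (pr1 L X -> L (X, a)) /\ (~ pr1 L X -> a = @form0 R n).
  move=> X; case: (classic (pr1 L X)) => [[a ha]|nX].
    by exists a; split => // h; case: h; exists a.
  by exists (@form0 R n); split => // h.
pose eps X := proj1_sig (constructive_indefinite_description _ (hex X)).
have epsP : forall X, (pr1 L X -> L (X, eps X)) /\ (~ pr1 L X -> eps X = @form0 R n).
  by move=> X; exact: (proj2_sig (constructive_indefinite_description _ (hex X))).
have Leps : forall X, pr1 L X -> L (X, eps X) by move=> X /(proj1 (epsP X)).
have Liff : forall p, L p <-> (pr1 L p.1 /\ p.2 = eps p.1).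
  move=> [X a] /=; split.
    by move=> h; split; [exists a | apply: (uniq X) => //; apply: Leps; exists a].
  by move=> [hX ->]; apply: Leps.
have kf : forall X, is_kform k (eps X).
  move=> X; case: (classic (pr1 L X)) => hX; first exact: (Lk _ (Leps X hX)).
  rewrite (proj2 (epsP X) hX); split => //.
  by move=> s1 s2 c x y; rewrite /Defs.form0; ring.
have lin : linear_on (pr1 L) eps.
  move=> c X Y hX hY.
  have h := Ladd _ _ (Lscale c _ (Leps X hX)) (Leps Y hY).
  apply: (uniq (c *: X + Y)) => //; apply: Leps; eexists; exact: h.
have skew : E_skew (pr1 L) eps.
  move=> X Y hX hY.
  have [_ h] := iso _ (Leps X hX).
  have := h _ (Leps Y hY); rewrite /pairing /= => e.
  apply: functional_extensionality => s.
  have := congr1 (fun f => f s) e; rewrite /Defs.formD /Defs.formZ /Defs.form0 /contract /=.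
  move=> e'; lra.
split.
  exists eps; split; [by move=> X _; apply: kf | by [] | by [] | by [] | ].
  move=> X; split.
    move=> h; have : L (X, @form0 R n).
      apply/wl => eta [Y hY] ; apply: h.
      have -> : eta = eps Y by apply: (uniq Y) => //; apply: Leps; exists eta.
      by exists Y => //; exists eta.
    by move/Liff => [? /= e]; split.
  move=> [hX e]; have : L (X, @form0 R n) by rewrite -e; apply: Leps.
  move/wl => h eta [Y hY ->]; apply: h; exists Y; exact: Leps.
split.
- move=> lag X.
  have E0 : pr1 L 0 by exists (@form0 R n).
  have Ecl : forall (c : R) (x y : 'rV[R]_n), pr1 L x -> pr1 L y -> pr1 L (c *: x + y).
    move=> c x y [a ha] [b hb]; eexists; exact: (Ladd _ _ (Lscale c _ ha) hb).
  have [Q [QinE QE Qlin]] := exists_proj E0 Ecl.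
  have hQ : Qok (pr1 L) Q by split.
  pose phi := fun (Y : Vsp R n) (t : seq (Vsp R n)) => - eps Y (X :: t).
  have hv : valid (pr1 L) phi.
    split.
    - move=> Y s1 s2 c x y; rewrite /phi.
      have [_ Hm _] := kf Y.
      rewrite (Hm (X :: s1)); ring.
    - move=> Y s1 s2 s3 x; rewrite /phi.
      have [_ _ Ha] := kf Y.
      by rewrite (Ha (X :: s1)) oppr0.
    - move=> c Y Z hY hZ; apply: functional_extensionality => t.
      rewrite /phi lin // /Defs.formD /Defs.formZ; ring.
    - move=> Y Z s hY hZ; rewrite /phi.
      have sw : forall W a b s, eps W (a :: b :: s) = - eps W (b :: a :: s).
        move=> W a b s'; have [_ Hm Ha] := kf W.
        by apply: (@swap _ _ _ Hm [::] [::] s') => x; apply: (Ha [::] [::]).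
      have sk : forall W1 W2 t, pr1 L W1 -> pr1 L W2 -> eps W1 (W2 :: t) = - eps W2 (W1 :: t).
        move=> W1 W2 t h1 h2; have := congr1 (fun f => f t) (skew W1 W2 h1 h2).
        by rewrite /contract /Defs.formZ mulN1r.
      by rewrite sw (sk Y Z) // sw !opprK.
  pose eta := fun s => T Q s phi.
  have : L (X, eta).
    apply/lag; split.
      split.
      - move=> s hs; apply: (@T_size _ _ Q s k.-1) => //.
          move=> Y t ht; have [H0 _ _] := kf Y; rewrite /phi H0 ?oppr0 //= => e; apply: ht; lia.
        by move=> e; apply: hs; lia.
      - exact: (T_multilinear hQ hv).
      - exact: (T_alt hQ hv).
    move=> [Y b] /Liff [hq /= ->]; apply: functional_extensionality => t.
    rewrite /pairing /Defs.formD /contract /Defs.form0 /= /eta (T_head _ hQ hv) //.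
    rewrite /phi; ring.
  by move=> h; exists eta.
- move=> allE p; split; first exact: iso.
  case: p => X eta [kp ort]; apply/Liff; split => //=.
  apply: functional_extensionality => -[|Y t].
    have [H1 _ _] := kp; rewrite /= in H1; have [H2 _ _] := kf X; rewrite H1 ?H2 //= => e; lia.
  have := congr1 (fun f => f t) (ort _ (Leps Y (allE Y))).
  have [_ h] := iso _ (Leps X (allE X)).
  have := congr1 (fun f => f t) (h _ (Leps Y (allE Y))).
  rewrite /pairing /Defs.formD /contract /Defs.form0 /= => e1 e2; lra.
Qed.
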